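(* Let $m\ge2$, $1\le i\le m-1$, and let $f(z)=f(z_1,\dots,z_m)$ be a rational function over $\mathbb Q(q,t)$ which is antisymmetric in $z_i$ and $z_{i+1}$. Then \[ \mathbf H^m_{q,t}\bigl(\Omega[M\,z_i/z_{i+1}]\,f(z)\bigr)=0,\qquad\text{where } \Omega[Mz]=\frac{(1-qz)(1-tz)}{(1-z)(1-qtz)}. \]
   Context: $M=(1-q)(1-t)$. For a rational function $g(z_1,\dots,z_m)$, $\boldsymbol\sigma(g)=\sum_{w\in S_m}w\bigl(g/\prod_{j<k}(1-z_k/z_j)\bigr)$ ($S_m$ permuting the variables) and \[ \mathbf H^m_{q,t}(g)=\boldsymbol\sigma\Bigl(g\,\frac{\prod_{j<k}(1-qt\,z_j/z_k)}{\prod_{j<k}(1-q\,z_j/z_k)(1-t\,z_j/z_k)}\Bigr), \] a symmetric rational function. *)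

(* Defs.v *)
From HB Require Import structures.
From mathcomp Require Import all_boot all_order all_algebra all_fingroup.
From mathcomp Require Import fraction.
From mathcomp Require Import mpoly.
Set Implicit Arguments. Unset Strict Implicit. Unset Printing Implicit Defensive.
Import Order.TTheory GRing.Theory.
Local Open Scope ring_scope.

Notation tofrac := (@FracField.tofrac _).
Local Notation "x %:F" := (tofrac x).

Definition Qqt : fieldType := {fraction {mpoly rat[2]}}.
Definition qq : Qqt := ('X_(@ord0 1) : {mpoly rat[2]})%:F.
Definition tt_ : Qqt := ('X_(@ord_max 1) : {mpoly rat[2]})%:F.

(* Rational functions in z_1..z_m (0-indexed z_0..z_{m-1}) over Q(q,t). *)
Definition RF (m : nat) : fieldType := {fraction {mpoly Qqt[m]}}.

Definition zv (m : nat) (j : 'I_m) : RF m := ('X_j : {mpoly Qqt[m]})%:F.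
Definition cst (m : nat) (c : Qqt) : RF m := (c%:MP : {mpoly Qqt[m]})%:F.

(* Action of w in S_m on rational functions: z_j |-> z_(w j),
   applied to numerator and denominator of a representative. *)
Definition zact (m : nat) (w : 'S_m) (f : RF m) : RF m :=
  (msym w (\n_(generic_quotient.repr f)))%:F / (msym w (\d_(generic_quotient.repr f)))%:F.

Definition sigma (m : nat) (g : RF m) : RF m :=
  \sum_(w : 'S_m)
     zact w (g / \prod_(j < m) \prod_(k < m | (j < k)%N) (1 - zv k / zv j)).

Definition Hqt (m : nat) (g : RF m) : RF m :=
  sigma (g * \prod_(j < m) \prod_(k < m | (j < k)%N)
          ((1 - cst m (qq * tt_) * (zv j / zv k)) /
           ((1 - cst m qq * (zv j / zv k)) * (1 - cst m tt_ * (zv j / zv k))))).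

Definition OmegaM (m : nat) (x : RF m) : RF m :=
  ((1 - cst m qq * x) * (1 - cst m tt_ * x)) /
  ((1 - x) * (1 - cst m (qq * tt_) * x)).

(* Main.v *)
Require Import Defs.
From HB Require Import structures.
From mathcomp Require Import all_boot all_order all_algebra all_fingroup.
From mathcomp Require Import fraction generic_quotient.
From mathcomp Require Import mpoly.
From mathcomp Require Import ring zify.
Import GRing.Theory.
Local Open Scope ring_scope.
Set Implicit Arguments. Unset Strict Implicit.
Local Notation "x %:F" := (@FracField.tofrac _ x).

Lemma fracE (R : idomainType) (x : {fraction R}) :
  x = (\n_(generic_quotient.repr x))%:F / (\d_(generic_quotient.repr x))%:F.
Proof.
have hd : \d_(generic_quotient.repr x) != 0 := denom_ratioP _.
apply: (mulIf (x:=(\d_(generic_quotient.repr x))%:F)); first by rewrite tofrac_eq0.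
rewrite divfK ?tofrac_eq0 //.
set r := generic_quotient.repr x.
rewrite -[x]reprK -/r.
unlock FracField.tofrac.
have := (@FracField.pi_mul R r (Ratio \d_r 1)).
move=> H.
apply/eqP.
rewrite -[_ * _]H.
rewrite FracField.equivf_def /FracField.mulf !numden_Ratio ?oner_neq0 ?mulf_neq0 ?oner_neq0 //.
by rewrite !mulr1 mulrC.
Qed.

Record good (R : idomainType) (phi : R -> R) : Prop := Good {
  gM : {morph phi : x y / x * y};
  gD : {morph phi : x y / x + y};
  gN : {morph phi : x / - x};
  g1 : phi 1 = 1;
  g0 : phi 0 = 0;
  ginj : injective phi }.

Section Gen.
Variable R : idomainType.
Variable phi : R -> R.
Hypothesis hg : good phi.
Let phiM := gM hg.
Let phiD := gD hg.
Let phiN := gN hg.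
Let phi1 := g1 hg.
Let phi0 := g0 hg.
Let phi_inj := ginj hg.

Definition act (x : {fraction R}) : {fraction R} :=
  (phi (\n_(generic_quotient.repr x)))%:F / (phi (\d_(generic_quotient.repr x)))%:F.

Lemma phi_neq0 a : a != 0 -> phi a != 0.
Proof.
move=> ha; apply: contra ha => /eqP H; apply/eqP; apply: phi_inj.
by rewrite H phi0.
Qed.

Lemma actE a b : act (a%:F / b%:F) = (phi a)%:F / (phi b)%:F.
Proof.
rewrite /act; set x := a%:F / b%:F.
set n := \n_(generic_quotient.repr x); set d := \d_(generic_quotient.repr x).
have hd : d != 0 := denom_ratioP _.
have hx : x = n%:F / d%:F by exact: fracE.
clearbody n d.
have hmd : phi d != 0 by exact: phi_neq0.
have [b0|hb] := eqVneq b 0.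
  have x0 : x = 0 by rewrite /x b0 tofrac0 invr0 mulr0.
  move: hx; rewrite x0 => /esym /eqP.
  rewrite mulf_eq0 invr_eq0 !tofrac_eq0 (negbTE hd) orbF => /eqP ->.
  by rewrite b0 phi0 tofrac0 !mul0r invr0 mulr0.
have hmb : phi b != 0 by exact: phi_neq0.
have hbF : b%:F != 0 by rewrite tofrac_eq0; exact: hb.
have hdF : d%:F != 0 by rewrite tofrac_eq0; exact: hd.
have hmbF : (phi b)%:F != 0 by rewrite tofrac_eq0; exact: hmb.
have hmdF : (phi d)%:F != 0 by rewrite tofrac_eq0; exact: hmd.
have E : a * d = n * b.
  apply/eqP; rewrite -tofrac_eq !tofracM -(eqr_div _ _ hbF hdF) -hx.
  by rewrite eqxx.
apply/eqP; rewrite (eqr_div _ _ hmdF hmbF) -!tofracM -!phiM E.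
exact: eqxx.
Qed.

Lemma actF a : act a%:F = (phi a)%:F.
Proof. by rewrite -[a%:F]divr1 -tofrac1 actE phi1 tofrac1 divr1. Qed.

Lemma actM : {morph act : x y / x * y}.
Proof.
move=> x y; rewrite [x]fracE [y]fracE mulf_div -!tofracM !actE !phiM !tofracM.
by rewrite mulf_div.
Qed.

Lemma act1 : act 1 = 1.
Proof. by rewrite -tofrac1 actF phi1. Qed.

Lemma actV x : act x^-1 = (act x)^-1.
Proof. by rewrite [x]fracE invf_div !actE invf_div. Qed.

Lemma actD : {morph act : x y / x + y}.
Proof.
move=> x y; rewrite [x]fracE [y]fracE.
set n1 := \n_ _; set d1 := \d_ _; set n2 := \n_ _; set d2 := \d_ _.
have h1 : d1 != 0 := denom_ratioP _.
have h2 : d2 != 0 := denom_ratioP _.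
clearbody n1 d1 n2 d2.
have hm1 : phi d1 != 0 by exact: phi_neq0.
have hm2 : phi d2 != 0 by exact: phi_neq0.
have h1F : d1%:F != 0 by rewrite tofrac_eq0; exact: h1.
have h2F : d2%:F != 0 by rewrite tofrac_eq0; exact: h2.
have hm1F : (phi d1)%:F != 0 by rewrite tofrac_eq0; exact: hm1.
have hm2F : (phi d2)%:F != 0 by rewrite tofrac_eq0; exact: hm2.
rewrite (addf_div _ _ h1F h2F) -!tofracM -tofracD !actE phiD !phiM.
by rewrite (addf_div _ _ hm1F hm2F) !tofracM tofracD !tofracM.
Qed.

Lemma actN x : act (- x) = - act x.
Proof. by rewrite [x]fracE -mulNr -tofracN !actE phiN tofracN mulNr. Qed.

Lemma actB x y : act (x - y) = act x - act y.
Proof. by rewrite actD actN. Qed.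

Lemma act_prod (I : Type) (r : seq I) (Pr : pred I) (F : I -> {fraction R}) :
  act (\prod_(i <- r | Pr i) F i) = \prod_(i <- r | Pr i) act (F i).
Proof. exact: (big_morph _ actM act1). Qed.

End Gen.

Lemma actC (R : idomainType) (phi1 phi2 : R -> R) (hg : good phi2) x :
  act phi2 (act phi1 x) = act (fun p => phi2 (phi1 p)) x.
Proof.
transitivity (act phi2 ((phi1 (\n_(generic_quotient.repr x)))%:F /
                        (phi1 (\d_(generic_quotient.repr x)))%:F)); first by [].
by rewrite (actE hg).
Qed.

Lemma act_ext (R : idomainType) (phi psi : R -> R) x :
  (forall p, phi p = psi p) -> act phi x = act psi x.
Proof. by move=> H; rewrite /act (H (\n_ _)) (H (\d_ _)). Qed.

Section Zact.
Variable m : nat.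
Local Notation P := {mpoly Qqt[m]}.
Implicit Types (w : 'S_m) (x y : RF m) (a b : P).

Lemma zact_act w : zact w = act (msym w).
Proof. by []. Qed.

Lemma gmsym w : good (@msym m Qqt w).
Proof.
split; [exact: msymM | exact: msymD | exact: msymN | exact: msym1 | exact: raddf0 | exact: inj_msym].
Qed.

Lemma zactM w : {morph zact w : x y / x * y}.
Proof. by move=> x y; rewrite zact_act (actM (gmsym w)). Qed.

Lemma zact1 w : zact w 1 = 1.
Proof. by rewrite zact_act (act1 (gmsym w)). Qed.

Lemma zactV w x : zact w x^-1 = (zact w x)^-1.
Proof. by rewrite zact_act (actV (gmsym w)). Qed.

Lemma zactD w : {morph zact w : x y / x + y}.
Proof. by move=> x y; rewrite zact_act (actD (gmsym w)). Qed.

Lemma zactN w x : zact w (- x) = - zact w x.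
Proof. by rewrite zact_act (actN (gmsym w)). Qed.

Lemma zactB w x y : zact w (x - y) = zact w x - zact w y.
Proof. by rewrite zactD zactN. Qed.

Lemma zactF w a : zact w a%:F = (msym w a)%:F.
Proof. by rewrite zact_act (actF (gmsym w)). Qed.

Lemma zact_prod w (I : Type) (r : seq I) (Pr : pred I) (F : I -> RF m) :
  zact w (\prod_(i <- r | Pr i) F i) = \prod_(i <- r | Pr i) zact w (F i).
Proof. exact: (big_morph _ (zactM w) (zact1 w)). Qed.

Lemma zactMm w1 w2 x : zact w2 (zact w1 x) = zact (w1 * w2)%g x.
Proof.
change (act (msym w2) (act (msym w1) x) = act (msym (w1 * w2)%g) x).
etransitivity; first exact: (actC (msym w1) (gmsym w2) x).
apply: act_ext => p; by rewrite msymMm.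
Qed.

Lemma zact_zv w j : zact w (zv j) = zv (w j).
Proof. by rewrite /zv zactF /msym mmapX mmap1U. Qed.

Lemma zact_cst w c : zact w (cst m c) = cst m c.
Proof. by rewrite /cst zactF /msym mmapC. Qed.

Lemma zv_neq0 (j : 'I_m) : zv j != 0.
Proof.
rewrite /zv tofrac_eq0; apply/eqP => /(congr1 (mcoeff U_(j))).
by rewrite mcoeffXU eqxx mcoeff0 => /eqP; rewrite oner_eq0.
Qed.

Lemma one_sub_neq0 (a b : 'I_m) c : a != b -> 1 - cst m c * (zv a / zv b) != 0.
Proof.
move=> ab; rewrite subr_eq0; apply/negP => /eqP E.
have : zv b = cst m c * zv a.
  by rewrite -[LHS]mul1r [in LHS]E -mulrA (divfK (zv_neq0 b)).
rewrite /zv /cst -tofracM => /eqP; rewrite tofrac_eq => /eqP /(congr1 (mcoeff U_(b))).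
rewrite mul_mpolyC mcoeffZ !mcoeffXU eqxx (negbTE ab) mulr0 => /eqP.
by rewrite oner_eq0.
Qed.

End Zact.

Lemma pairne m (a b c d : 'I_m) : ((a, b) != (c, d)) = (val a != val c) || (val b != val d).
Proof. by rewrite xpair_eqE negb_and. Qed.

Lemma two_neq0 m : (2%:R : RF m) != 0.
Proof.
rewrite -(rmorph_nat (@FracField.tofrac _)) tofrac_eq0.
rewrite -(rmorph_nat (@mpolyC m Qqt)) mpolyC_eq0.
rewrite -(rmorph_nat (@FracField.tofrac _)) tofrac_eq0.
by rewrite -(rmorph_nat (@mpolyC 2 rat)) mpolyC_eq0.
Qed.

Lemma key (F : fieldType) (Ox Oy kx ky f Q1 Q2 cx cy : F) :
  Ox * kx = cx^-1 -> Oy * ky = cy^-1 ->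
  Oy * - f * (ky * Q1) * (cx * Q2)^-1 = - (Ox * f * (kx * Q1) / (cy * Q2)).
Proof.
move=> H1 H2; rewrite !invfM -H1 -H2; ring.
Qed.

Lemma Omk_gen (F : fieldType) (A B C D : F) : A != 0 -> B != 0 -> D != 0 ->
  (A * B) / (C * D) * (D / (A * B)) = C^-1.
Proof.
move=> hA hB hD.
have [C0|hC] := eqVneq C 0.
  by rewrite C0 mul0r invr0 !mulr0 mul0r.
field.
by rewrite hA hB hD hC.
Qed.

Lemma Om_k m (z : RF m) :
  (1 - cst m qq * z) != 0 -> (1 - cst m tt_ * z) != 0 -> (1 - cst m (qq * tt_) * z) != 0 ->
  OmegaM z * ((1 - cst m (qq * tt_) * z) / ((1 - cst m qq * z) * (1 - cst m tt_ * z)))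
  = (1 - z)^-1.
Proof.
rewrite /OmegaM => hA hB hD; exact: (@Omk_gen _ _ _ (1 - z) _ hA hB hD).
Qed.

Section Main.
Variables (m i : nat) (hi : (i.+1 < m)%N).
Let i0 : 'I_m := Ordinal (ltnW hi).
Let i1 : 'I_m := Ordinal hi.
Let s := tperm i0 i1.

Lemma pred_swap (j k : 'I_m) :
  ((s j < s k)%N && ((j,k) != (i1,i0))) = ((j < k)%N && ((j,k) != (i0,i1))).
Proof.
rewrite !pairne /s.
have v0 : val i0 = i by [].
have v1 : val i1 = i.+1 by [].
case: tpermP => [-> | -> | /eqP nj0 /eqP nj1];
case: tpermP => [-> | -> | /eqP nk0 /eqP nk1];
repeat match goal with H : is_true (_ != _) |- _ => move: H end;
rewrite -?val_eqE /= ?v0 ?v1; lia.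
Qed.

Definition PP (h : 'I_m -> 'I_m -> RF m) :=
  \prod_(j < m) \prod_(k < m | (j < k)%N) h j k.
Definition QQ (h : 'I_m -> 'I_m -> RF m) :=
  \prod_(p : 'I_m * 'I_m | (p.1 < p.2)%N && (p != (i0, i1))) h p.1 p.2.

Lemma PP_split h : PP h = h i0 i1 * QQ h.
Proof.
rewrite /PP pair_big_dep /= (bigD1 (i0, i1)) /=; last by rewrite ltnSn.
by [].
Qed.

Lemma PP_swap h : (forall j k, zact s (h j k) = h (s j) (s k)) ->
  zact s (PP h) = h i1 i0 * QQ h.
Proof.
move=> Hh; rewrite /PP zact_prod.
under eq_bigr => j _ do rewrite zact_prod.
under eq_bigr => j _ do under eq_bigr => k _ do rewrite Hh.
rewrite pair_big_dep /=.
rewrite (reindex_inj (h := fun p : 'I_m * 'I_m => (s p.1, s p.2))) /=; last first.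
  by move=> [a b] [c d] /= [] /perm_inj -> /perm_inj ->.
under eq_bigr => p _ do rewrite !tpermK.
rewrite (bigD1 (i1, i0)) /=; last by rewrite /s tpermL tpermR ltnSn.
congr (_ * _); apply: eq_bigl => -[j k] /=.
exact: pred_swap.
Qed.

Let h1 (j k : 'I_m) : RF m := (1 - cst m (qq * tt_) * (zv j / zv k)) /
   ((1 - cst m qq * (zv j / zv k)) * (1 - cst m tt_ * (zv j / zv k))).
Let h2 (j k : 'I_m) : RF m := 1 - zv k / zv j.

Lemma main_lem (f : RF m) :
  zact s f = - f -> Hqt (OmegaM (zv i0 / zv i1) * f) = 0.
Proof.
move=> hf.
have hne : i0 != i1 by rewrite -val_eqE /= neq_ltn ltnSn.
have hne' : i1 != i0 by rewrite eq_sym.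
change (\sum_(w : 'S_m) zact w ((OmegaM (zv i0 / zv i1) * f * PP h1) / PP h2) = 0).
set F := (OmegaM (zv i0 / zv i1) * f * PP h1) / PP h2.
have HF : zact s F = - F.
  have hOm : zact s (OmegaM (zv i0 / zv i1)) = OmegaM (zv i1 / zv i0).
    rewrite /OmegaM !(zactM, zactV, zactB, zact1, zact_cst, zact_zv).
    by rewrite /s tpermL tpermR.
  rewrite /F zactM zactV (zactM s (OmegaM _ * f)) (zactM s (OmegaM _)) hOm hf.
  rewrite (PP_swap (h := h1)); last first.
    by move=> j k; rewrite /h1 !(zactM, zactV, zactB, zact1, zact_cst, zact_zv).
  rewrite (PP_swap (h := h2)); last first.
    by move=> j k; rewrite /h2 !(zactM, zactV, zactB, zact1, zact_cst, zact_zv).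
  rewrite !PP_split.
  apply: key.
    by rewrite /h1 /h2 Om_k // one_sub_neq0.
  by rewrite /h1 /h2 Om_k // one_sub_neq0.
have E : \sum_(w : 'S_m) zact w F = - \sum_(w : 'S_m) zact w F.
  rewrite {1}(reindex_inj (mulgI s)) /=.
  have E1 : forall w, zact (s * w)%g F = - zact w F.
    by move=> w; rewrite -(zactMm s w F) HF zactN.
  rewrite -sumrN; apply: eq_bigr => w _; exact: E1.
move: E; set S := \sum_(w : 'S_m) zact w F => /eqP.
rewrite -subr_eq0 opprK -mulr2n -mulr_natr mulf_eq0 (negbTE (two_neq0 m)) orbF.
by move/eqP.
Qed.

End Main.

(* 0-indexed: i, i+1 correspond to the paper's z_{i+1}, z_{i+2}. *)
Theorem lemma4p2p2 (m : nat) (hm : (2 <= m)%N) (i : nat) (hi : (i.+1 < m)%N)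
  (f : RF m) :
  let i0 : 'I_m := Ordinal (ltnW hi) in
  let i1 : 'I_m := Ordinal hi in
  zact (tperm i0 i1) f = - f ->
  Hqt (OmegaM (zv i0 / zv i1) * f) = 0.
Proof.
move=> i0 i1 hf.
exact: (main_lem hf).
Qed.
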